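(* Consider an instance of $\mathrm{BAL}(\mu,\nu)$ in the correlated setting. (1) If $\mathcal T^k\subseteq V\times\{0\}$ is a set of size $k$ maximizing $\Psi$ and $\mathcal S^k\subseteq\hat V$ is a set of size $k$ maximizing $\Phi^{\ge1}$, then $\Psi(\mathcal T^k)\ge\Phi^{\ge1}(\mathcal S^k)$. (2) Let $\varepsilon>0$ and $k\ge\nu/\varepsilon$. If $\mathcal T^k\subseteq V\times\{0\}$ is a set of size $k$ maximizing $\Psi$ and $\mathcal T^{\lfloor k/\nu\rfloor}\subseteq V\times\{0\}$ is a set of size $\lfloor k/\nu\rfloor$ maximizing $\Psi$, then $\Psi(\mathcal T^{\lfloor k/\nu\rfloor})\ge\frac{1-\varepsilon}{\nu+1}\Psi(\mathcal T^k)$. (3) Let $\mathcal T\subseteq V\times\{0\}$ be of size $\lfloor k/\nu\rfloor$. Then $\mathcal S'=\{(v,j):(v,0)\in\mathcal T,\ j\in[\nu]\}\subseteq\hat V$ has size at most $k$ and $\Phi^{\ge1}(\mathcal S')=\Psi(\mathcal T)$.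
   Context: Triggering model: for a directed graph $G=(V,E)$ and $p:E\to[0,1]$, an outcome $X=(T_v)_{v\in V}$ is obtained by having each node $v$ independently choose a subset $T_v$ of its in-neighbours $N_v$, with $T_v=S$ with probability $\prod_{u\in S}p_{uv}\prod_{u\in N_v\setminus S}(1-p_{uv})$; $\rho_X(A)$ is the set of nodes reachable from $A\subseteq V$ via arcs $\{(u,v):u\in T_v\}$. $\mathrm{BAL}(\mu,\nu)$ for integer constants $\mu\ge\nu\ge2$: instance = directed graph $G=(V,E)$, seed sets $\mathcal I=(I_1,\dots,I_\mu)$, budget $k\ge2$, and probability functions $p_1,\dots,p_\mu$; in the correlated setting $p_1=\dots=p_\mu=p$ and a single outcome $X$ w.r.t. $p$ is used by all campaigns (campaign $i$ reaches $v$ from seeds $A_i$ iff $v\in\rho_X(A_i)$). Let $\hat V=V\times[\mu]$; $\mathcal S\subseteq\hat V$ is identified with $(S_1,\dots,S_\mu)$, $S_i=\{v:(v,i)\in\mathcal S\}$. $V^j_X$ is the set of nodes reached by exactly $j$ campaigns from seeds $\mathcal I$. $\Phi^{\ge1}(\mathcal S)$ is the expected number of nodes $v\notin V^0_X$ reached by at least $\nu$ campaigns from seeds $(I_i\cup S_i)_i$ (equivalently, by none or at least $\nu$). For $\mathcal T\subseteq V\times\{0\}$ with underlying node set $T$, $\Psi(\mathcal T)=\mathbb E_X\big[\big|(\rho_X(T)\cap\bigcup_{j=1}^{\nu-1}V^j_X)\cup\bigcup_{j=\nu}^{\mu}V^j_X\big|\big]$. *)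

(* Defs.v *)
From mathcomp Require Import all_boot all_order all_algebra.
Set Implicit Arguments. Unset Strict Implicit. Unset Printing Implicit Defensive.
Import Order.TTheory GRing.Theory Num.Theory.
Local Open Scope ring_scope.

Definition in_nbrs (V : finType) (E : rel V) (v : V) : {set V} := [set u | E u v].

(* An outcome X = (T_v)_v of the triggering model. *)
Definition outcome (V : finType) := {ffun V -> {set V}}.

Definition prob_outcome (R : realFieldType) (V : finType) (E : rel V)
  (p : V -> V -> R) (X : outcome V) : R :=
  \prod_(v : V)
    (if X v \subset in_nbrs E v then
       (\prod_(u in X v) p u v) * \prod_(u in in_nbrs E v :\: X v) (1 - p u v)
     else 0).

Definition expect (R : realFieldType) (V : finType) (E : rel V)
  (p : V -> V -> R) (f : outcome V -> R) : R :=
  \sum_(X : outcome V) prob_outcome E p X * f X.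

(* rho_X(A): nodes reachable from A via live arcs {(u,v) | u \in T_v}. *)
Definition rho (V : finType) (X : outcome V) (A : {set V}) : {set V} :=
  [set v | [exists a in A, connect [rel u w | u \in X w] a v]].

Definition ncamp (V : finType) (mu : nat) (X : outcome V)
  (A : 'I_mu -> {set V}) (v : V) : nat :=
  #|[set i : 'I_mu | v \in rho X (A i)]|.

Definition Vj (V : finType) (mu : nat) (X : outcome V)
  (I : 'I_mu -> {set V}) (j : nat) : {set V} :=
  [set v | ncamp X I v == j].

Definition Scomp (V : finType) (mu : nat) (S : {set V * 'I_mu}) (i : 'I_mu)
  : {set V} := [set v | (v, i) \in S].

Definition PhiGe1 (R : realFieldType) (V : finType) (E : rel V)
  (p : V -> V -> R) (mu nu : nat) (I : 'I_mu -> {set V})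
  (S : {set V * 'I_mu}) : R :=
  expect E p (fun X =>
    (#|[set v | (v \notin Vj X I 0)
               && (nu <= ncamp X (fun i => I i :|: Scomp S i) v)%N]|)%:R).

(* Psi(T), with T a subset of V x {0} identified with its node set T. *)
Definition Psi (R : realFieldType) (V : finType) (E : rel V)
  (p : V -> V -> R) (mu nu : nat) (I : 'I_mu -> {set V}) (T : {set V}) : R :=
  expect E p (fun X =>
    (#|(rho X T :&: \bigcup_(1 <= j < nu) Vj X I j)
        :|: \bigcup_(nu <= j < mu.+1) Vj X I j|)%:R).

(* Main.v *)
Require Import Defs.
From mathcomp Require Import all_boot all_order all_algebra.
From Stdlib Require Import Lia.
From mathcomp Require Import zify ring lra.
Set Implicit Arguments. Unset Strict Implicit. Unset Printing Implicit Defensive.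
Import Order.TTheory GRing.Theory Num.Theory.
Local Open Scope ring_scope.

Lemma sub_card_ex (T : finType) (A : {set T}) n :
  (n <= #|A|)%N -> exists B : {set T}, B \subset A /\ #|B| = n.
Proof.
move/card_geqP=> [s [us ss sA]].
exists [set x in s]; split.
  by apply/subsetP=> x; rewrite inE => /sA.
by rewrite cardsE (card_uniqP us).
Qed.

Lemma pad_ex (T : finType) (A : {set T}) n :
  (#|A| <= n)%N -> (n <= #|T|)%N -> exists B : {set T}, A \subset B /\ #|B| = n.
Proof.
move=> h1 h2.
have [C [CA cC]] := @sub_card_ex T (~: A) (n - #|A|) ltac:(rewrite cardsCs; lia).
exists (A :|: C); split; first exact: subsetUl.
have := cardsUI A C.
have -> : A :&: C = set0.
  apply/setP=> x; rewrite !inE; apply/negbTE; apply/andP=> [[xA xC]].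
  by move/subsetP: CA => /(_ x xC); rewrite inE xA.
rewrite cards0 addn0 cC; lia.
Qed.

Lemma rho_mono (V : finType) (X : outcome V) (A B : {set V}) :
  A \subset B -> rho X A \subset rho X B.
Proof.
move/subsetP=> AB; apply/subsetP=> v; rewrite !inE => /existsP [a /andP [aA c]].
by apply/existsP; exists a; rewrite AB.
Qed.

Lemma rho_U (V : finType) (X : outcome V) (A B : {set V}) v :
  v \in rho X (A :|: B) -> (v \in rho X A) || (v \in rho X B).
Proof.
rewrite !inE => /existsP [a /andP [aAB c]].
move: aAB; rewrite inE => /orP [aA|aB].
  by apply/orP; left; apply/existsP; exists a; rewrite aA.
by apply/orP; right; apply/existsP; exists a; rewrite aB.
Qed.

Lemma mem_bigcup_nat (T : finType) (F : nat -> {set T}) a b x :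
  (x \in \bigcup_(a <= j < b) F j) = has (fun j => x \in F j) (index_iota a b).
Proof.
elim: (index_iota a b) => [|j r IH]; first by rewrite big_nil inE.
by rewrite big_cons inE IH.
Qed.

Lemma mem_bigcup_Vj (V : finType) mu (X : outcome V) (I : 'I_mu -> {set V}) a b v :
  (v \in \bigcup_(a <= j < b) Vj X I j) = (a <= ncamp X I v < b)%N.
Proof.
rewrite mem_bigcup_nat; apply/hasP/idP.
  by move=> [j]; rewrite mem_index_iota inE => h /eqP ->.
move=> h; exists (ncamp X I v); first by rewrite mem_index_iota.
by rewrite inE.
Qed.

Lemma ncamp_le (V : finType) mu (X : outcome V) (I : 'I_mu -> {set V}) v :
  (ncamp X I v <= mu)%N.
Proof. by rewrite /ncamp; apply: leq_trans (max_card _) _; rewrite card_ord. Qed.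

Lemma card_ltord mu nu : (nu <= mu)%N -> #|[set i : 'I_mu | (i < nu)%N]| = nu.
Proof.
move=> h.
have -> : [set i : 'I_mu | (i < nu)%N] = [set widen_ord h j | j in 'I_nu].
  apply/setP=> i; rewrite inE; apply/idP/imsetP.
    by move=> hi; exists (Ordinal hi) => //; apply: val_inj.
  by move=> [j _ ->]; rewrite /= ltn_ord.
rewrite card_imset ?card_ord //.
by move=> i j /(congr1 val) /= e; apply: val_inj.
Qed.

Section Exp.
Variables (R : realFieldType) (V : finType) (E : rel V) (p : V -> V -> R).
Hypothesis hp : forall u v, E u v -> 0 <= p u v <= 1.

Lemma prob_ge0 X : 0 <= prob_outcome E p X.
Proof.
apply: prodr_ge0 => v _; case: ifP => // /subsetP sub.
apply: mulr_ge0; apply: prodr_ge0 => u.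
  by move/sub; rewrite inE => /hp /andP [].
by rewrite !inE => /andP [_ /hp /andP [_ h]]; rewrite subr_ge0.
Qed.

Lemma expect_le f g : (forall X, f X <= g X) -> expect E p f <= expect E p g.
Proof. by move=> h; apply: ler_sum => X _; apply: ler_wpM2l; [exact: prob_ge0 | exact: h]. Qed.

Lemma expect_ge0 f : (forall X, 0 <= f X) -> 0 <= expect E p f.
Proof. by move=> h; apply: sumr_ge0 => X _; apply: mulr_ge0 (prob_ge0 X) (h X). Qed.

Lemma expectD f g : expect E p (fun X => f X + g X) = expect E p f + expect E p g.
Proof. by rewrite /expect -big_split; apply: eq_bigr => X _; rewrite mulrDr. Qed.

End Exp.
Section PsiL.
Variables (R : realFieldType) (V : finType) (E : rel V) (p : V -> V -> R).
Variables (mu nu : nat) (I : 'I_mu -> {set V}).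
Hypothesis hp : forall u v, E u v -> 0 <= p u v <= 1.


Lemma Psi_mono (A B : {set V}) : A \subset B -> Psi E p nu I A <= Psi E p nu I B.
Proof.
move=> AB; apply: expect_le => // X; rewrite ler_nat; apply: subset_leq_card.
by apply: setSU; apply: setSI; apply: rho_mono.
Qed.

Lemma Psi_ge0 (A : {set V}) : 0 <= Psi E p nu I A.
Proof. by apply: expect_ge0 => // X; apply: ler0n. Qed.

Lemma Psi_subadd (A B : {set V}) :
  Psi E p nu I (A :|: B) + Psi E p nu I set0 <= Psi E p nu I A + Psi E p nu I B.
Proof.
rewrite /Psi -!expectD; apply: expect_le => // X.
rewrite -!natrD ler_nat.
set Y := (rho X A :&: _) :|: _.
set Z := (rho X B :&: _) :|: _.
rewrite -(cardsUI Y Z); apply: leq_add; apply: subset_leq_card.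
  apply/subsetP=> v; rewrite !in_setU !in_setI => /orP [/andP [/rho_U /orP [h|h] h2]|h];
    by rewrite ?h ?h2 ?orbT.
apply/subsetP=> v; rewrite !in_setU !in_setI => /orP [/andP [h h2]|h].
  2: by rewrite /Y /Z !in_setU h !orbT.
idtac.
move: h; rewrite inE => /existsP [a]; by rewrite inE.
Qed.

Lemma Psi_bound (M : R) q :
  (q <= #|V|)%N -> (forall T' : {set V}, #|T'| = q -> Psi E p nu I T' <= M) ->
  forall n (S : {set V}), (#|S| <= n.+1 * q)%N ->
    Psi E p nu I S + n%:R * Psi E p nu I set0 <= n.+1%:R * M.
Proof.
move=> qV hM.
have base : forall S : {set V}, (#|S| <= q)%N -> Psi E p nu I S <= M.
  move=> S hS; have [S' [SS' cS']] := pad_ex hS qV.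
  exact: le_trans (Psi_mono SS') (hM _ cS').
elim=> [|n IH] S hS.
  by rewrite mul0r addr0 mul1r; apply: base; rewrite mul1n in hS.
have [A [AS cA]] := @sub_card_ex _ S (minn q #|S|) (geq_minr _ _).
have hB : (#|S :\: A| <= n.+1 * q)%N.
  rewrite cardsD (setIidPr AS) cA; move: hS; rewrite mulSn; lia.
have eS : S = A :|: (S :\: A).
  apply/setP=> x; rewrite !inE; case: (boolP (x \in A)) => xA //=.
  by rewrite (subsetP AS x xA).
have hA : Psi E p nu I A <= M by apply: base; rewrite cA geq_minl.
have := IH _ hB; have := Psi_subadd A (S :\: A); rewrite -eS.
rewrite -[n.+1]addn1 -[(n + 1).+1]addn1 !natrD.
move=> h1 h2; lra.
Qed.

End PsiL.

Lemma mem_ncampset (V : finType) mu (X : outcome V) (A : 'I_mu -> {set V}) v i :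
  (i \in [set i | v \in rho X (A i)]) = (v \in rho X (A i)).
Proof. by rewrite [LHS]inE. Qed.

Lemma Phi_le_Psi (R : realFieldType) (V : finType) (E : rel V) (p : V -> V -> R)
  (mu nu : nat) (I : 'I_mu -> {set V}) (S : {set V * 'I_mu}) :
  (forall u v, E u v -> 0 <= p u v <= 1) ->
  PhiGe1 E p nu I S <= Psi E p nu I [set x.1 | x in S].
Proof.
move=> hp; apply: expect_le => // X; rewrite ler_nat; apply: subset_leq_card.
apply/subsetP=> v; rewrite [v \in [set _ | _]]inE /Vj inE => /andP [h0 hnu].
rewrite in_setU in_setI !mem_bigcup_Vj.
have hle := ncamp_le X I v.
case: (leqP nu (ncamp X I v)) => hc.
  by rewrite ltnS hle orbT.
rewrite orbF andbT lt0n h0 andbT.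
case: (boolP (v \in rho X [set x.1 | x in S])) => // hT; exfalso.
suff : (ncamp X (fun i => I i :|: Scomp S i) v <= ncamp X I v)%N by lia.
apply: subset_leq_card; apply/subsetP=> i; rewrite !mem_ncampset => /rho_U /orP [//|h].
exfalso; move/negP: hT; apply.
apply: (subsetP (rho_mono X _)) h; apply/subsetP=> x; rewrite /Scomp inE => xi.
by apply/imsetP; exists (x, i).
Qed.

Lemma Phi_eq_Psi (R : realFieldType) (V : finType) (E : rel V) (p : V -> V -> R)
  (mu nu : nat) (I : 'I_mu -> {set V}) (T : {set V}) :
  (2 <= nu)%N -> (nu <= mu)%N ->
  PhiGe1 E p nu I [set vj : V * 'I_mu | (vj.1 \in T) && (vj.2 < nu)%N]
  = Psi E p nu I T.
Proof.
move=> h2 hnm; rewrite /PhiGe1 /Psi /expect; apply: eq_bigr => X _.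
congr (_ * _%:R); apply: eq_card => v.
rewrite [v \in [set _ | _]]inE /Vj inE in_setU in_setI !mem_bigcup_Vj.
set S' := [set vj : V * 'I_mu | _].
have hle := ncamp_le X I v.
have hS i : Scomp S' i = if (i < nu)%N then T else set0.
  by apply/setP=> x; rewrite /Scomp !inE /=; case: (i < nu)%N; rewrite ?andbT ?andbF ?inE.
have c1 : (ncamp X I v <= ncamp X (fun i => I i :|: Scomp S' i) v)%N.
  apply: subset_leq_card; apply/subsetP=> i; rewrite !mem_ncampset => h.
  by apply: (subsetP (rho_mono X (subsetUl _ _))) h.
case: (boolP (v \in rho X T)) => hT.
  have c2 : (nu <= ncamp X (fun i => I i :|: Scomp S' i) v)%N.
    rewrite -(card_ltord hnm); apply: subset_leq_card; apply/subsetP=> i.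
    rewrite mem_ncampset inE => hi; apply: (subsetP (rho_mono X _)) hT.
    by rewrite hS hi subsetUr.
  rewrite c2 andbT /= ltnS hle andbT.
  case: (ncamp X I v) => [|c]; first by rewrite /=; lia.
  by rewrite /=; case: ltnP.
have c2 : (ncamp X (fun i => I i :|: Scomp S' i) v <= ncamp X I v)%N.
  apply: subset_leq_card; apply/subsetP=> i; rewrite !mem_ncampset => /rho_U /orP [//|h].
  move: h; rewrite hS; case: (i < nu)%N => h.
    by rewrite h in hT.
  by move: h; rewrite inE => /existsP [a]; rewrite inE.
rewrite /= ltnS hle andbT.
case: (leqP nu (ncamp X I v)) => hc.
  by rewrite (leq_trans hc c1) andbT; apply/eqP => e; rewrite e in hc; lia.
by apply/negbTE; apply/negP => /andP [_ h]; lia.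
Qed.

Theorem mainTheorem12 (R : realFieldType) (V : finType) (E : rel V)
  (p : V -> V -> R) (mu nu : nat) (I : 'I_mu -> {set V}) (k : nat) :
  (2 <= nu)%N -> (nu <= mu)%N -> (2 <= k)%N ->
  (forall u v, E u v -> 0 <= p u v <= 1) ->
  (* (1) *)
  (forall (Tk : {set V}) (Sk : {set V * 'I_mu}),
     #|Tk| = k ->
     (forall T' : {set V}, #|T'| = k -> Psi E p nu I T' <= Psi E p nu I Tk) ->
     #|Sk| = k ->
     (forall S' : {set V * 'I_mu}, #|S'| = k ->
        PhiGe1 E p nu I S' <= PhiGe1 E p nu I Sk) ->
     PhiGe1 E p nu I Sk <= Psi E p nu I Tk)
  /\
  (* (2) *)
  (forall (eps : R), 0 < eps -> nu%:R / eps <= k%:R ->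
   forall (Tk Tkn : {set V}),
     #|Tk| = k ->
     (forall T' : {set V}, #|T'| = k -> Psi E p nu I T' <= Psi E p nu I Tk) ->
     #|Tkn| = (k %/ nu)%N ->
     (forall T' : {set V}, #|T'| = (k %/ nu)%N ->
        Psi E p nu I T' <= Psi E p nu I Tkn) ->
     (1 - eps) / (nu.+1)%:R * Psi E p nu I Tk <= Psi E p nu I Tkn)
  /\
  (* (3) *)
  (forall T : {set V}, #|T| = (k %/ nu)%N ->
     let S' := [set vj : V * 'I_mu | (vj.1 \in T) && (vj.2 < nu)%N] in
     (#|S'| <= k)%N /\ PhiGe1 E p nu I S' = Psi E p nu I T).
Proof.
move=> h2 hnm hk2 hp; split; [|split].
- move=> Tk Sk cTk hTk cSk _.
  have c0 : (#|[set x.1 | x in Sk]| <= k)%N by rewrite -cSk leq_imset_card.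
  have kV : (k <= #|V|)%N by rewrite -cTk max_card.
  have [T'' [sub cT'']] := pad_ex c0 kV.
  apply: le_trans (@Phi_le_Psi R V E p mu nu I Sk hp) _.
  exact: le_trans (@Psi_mono R V E p mu nu I hp _ _ sub) (hTk _ cT'').
- move=> eps eps0 hk Tk Tkn cTk hTk cTkn hTkn.
  set P := Psi E p nu I Tk; set M := Psi E p nu I Tkn.
  have P0 : 0 <= P by apply: Psi_ge0.
  have M0 : 0 <= M by apply: Psi_ge0.
  have d0 : 0 < (nu.+1)%:R :> R by rewrite ltr0n.
  case: (lerP (1 - eps) 0) => he.
    have : (1 - eps) / (nu.+1)%:R <= 0.
      by rewrite mulr_le0_ge0 // invr_ge0 ltW.
    move=> h; apply: le_trans (_ : 0 <= M); last done.
    by rewrite mulr_le0_ge0.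
  have hk' : nu%:R <= k%:R * eps :> R by rewrite -ler_pdivrMr.
  have nuk : (nu < k)%N.
    rewrite -(ltr_nat R); apply: le_lt_trans hk' _.
    have : 0 < k%:R :> R by rewrite ltr0n; lia.
    move=> k0; nra.
  set q := (k %/ nu)%N.
  have q0 : (0 < q)%N by rewrite divn_gt0; lia.
  have qV : (q <= #|V|)%N by rewrite /q -cTkn max_card.
  set n := (k %/ q)%N.
  have hS : (#|Tk| <= n.+1 * q)%N by rewrite cTk ltnW // ltn_ceil.
  have hB := Psi_bound hp qV hTkn hS.
  have C0 : 0 <= Psi E p nu I set0 by apply: Psi_ge0.
  have hPM : P <= n.+1%:R * M.
    apply: le_trans hB; rewrite lerDl; apply: mulr_ge0 => //; exact: ler0n.
  have f1 : (n * q <= k)%N by apply: leq_trunc_div.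
  have f2 : (k <= q.+1 * nu)%N by apply: ltnW; apply: ltn_ceil; lia.
  have g1 : n%:R * q%:R <= k%:R :> R by rewrite -natrM ler_nat.
  have g2 : k%:R <= (q%:R + 1) * nu%:R :> R.
    by rewrite natr1 -natrM ler_nat.
  have q0r : 0 < q%:R :> R by rewrite ltr0n.
  have n0 : 0 <= n%:R :> R by apply: ler0n.
  have key : (1 - eps) * (n%:R + 1) <= nu%:R + 1.
    have : (1 - eps) * (n%:R + 1) * q%:R <= (nu%:R + 1) * q%:R.
      have e1 : (1 - eps) * (n%:R + 1) * q%:R <= (1 - eps) * (k%:R + q%:R).
        rewrite -mulrA; apply: ler_wpM2l; first exact: ltW.
        rewrite mulrDl mul1r; apply: lerD => //; lra.
      apply: le_trans e1 _; nra.
    by rewrite ler_pM2r.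
  rewrite -natr1 in hPM.
  rewrite mulrAC ler_pdivrMr //.
  rewrite -natr1.
  nra.
- move=> T cT S'; split.
    have -> : S' = setX T [set i : 'I_mu | (i < nu)%N].
      by apply/setP=> [[v i]]; rewrite !inE.
    by rewrite cardsX card_ltord // cT leq_trunc_div.
  exact: Phi_eq_Psi.
Qed.
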